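(* Let $G=(V,E)$ be a $D$-regular bipartite unweighted graph satisfying $CD(2,\infty)$ at some vertex $x\in V$. Then $x$ satisfies the small sphere property (SSP) and the non-clustering property (NCP).
   Context: The Laplacian of an unweighted graph is $\Delta f(x)=\sum_{y\sim x}(f(y)-f(x))$. $2\Gamma(f,g)=\Delta(fg)-f\Delta g-g\Delta f$, $2\Gamma_2(f,g)=\Delta\Gamma(f,g)-\Gamma(f,\Delta g)-\Gamma(g,\Delta f)$, $\Gamma f=\Gamma(f,f)$, $\Gamma_2f=\Gamma_2(f,f)$. $G$ satisfies $CD(K,\infty)$ at $x$ if $\Gamma_2f(x)\ge K\Gamma f(x)$ for all $f:V\to\mathbb R$. $d$ is the combinatorial distance, $S_k(x)=\{y:d(x,y)=k\}$, and $d_-^x(z)=\#\{y\sim z: d(y,x)<d(z,x)\}$. For a $D$-regular unweighted graph and a vertex $x$: (SSP) holds at $x$ if $\#S_2(x)\le\binom D2$; (NCP) holds at $x$ if, whenever $d_-^x(z)=2$ for all $z\in S_2(x)$, for every $y_1,y_2\in S_1(x)$ there is at most one $z\in S_2(x)$ with $y_1\sim z\sim y_2$. *)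

(* Defs.v *)
From HB Require Import structures.
From mathcomp Require Import all_boot all_order all_algebra.
Set Implicit Arguments. Unset Strict Implicit. Unset Printing Implicit Defensive.
Import Order.TTheory GRing.Theory Num.Theory.

(* A (locally finite, simple, unweighted) graph on a vertex type V : eqType is
   given by its neighbour lists  N : V -> seq V ;  y ~ x  iff  y \in N x.
   The structural hypotheses (no repeated neighbour, no loops, symmetry,
   D-regularity, bipartiteness) are stated as explicit hypotheses of the
   theorem. *)

Section Graph.
Variable V : eqType.
Variable N : V -> seq V.

Definition adj (a b : V) : bool := b \in N a.

Definition walk (n : nat) (a b : V) : Prop :=
  exists p : seq V, size p = n /\ path adj a p /\ last a p = b.

Definition dist_le (a b : V) (k : nat) : Prop :=
  exists m, (m <= k)%N /\ walk m a b.

Definition dist (a b : V) (k : nat) : Prop :=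
  walk k a b /\ forall m, (m < k)%N -> ~ walk m a b.

(* d(a,b) < d(c,e)  (with the convention d = +oo between different components) *)
Definition dist_lt (a b c e : V) : Prop :=
  exists k, dist_le a b k /\ ~ dist_le c e k.

Definition sphere (x : V) (k : nat) (y : V) : Prop := dist x y k.

Definition dminus_is (x z : V) (m : nat) : Prop :=
  exists s : seq V, uniq s /\ size s = m /\
    forall y, y \in s <-> (adj z y /\ dist_lt y x z x).

Definition SSP (D : nat) (x : V) : Prop :=
  forall s : seq V, uniq s -> (forall z, z \in s -> sphere x 2 z) ->
    (size s <= 'C(D, 2))%N.

Definition NCP (x : V) : Prop :=
  (forall z, sphere x 2 z -> dminus_is x z 2) ->
  forall y1 y2, sphere x 1 y1 -> sphere x 1 y2 -> y1 <> y2 ->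
  forall z1 z2, sphere x 2 z1 -> sphere x 2 z2 ->
    adj y1 z1 -> adj z1 y2 -> adj y1 z2 -> adj z2 y2 -> z1 = z2.

Variable R : realFieldType.
Local Open Scope ring_scope.

Definition lap (f : V -> R) (x : V) : R := \sum_(y <- N x) (f y - f x).

Definition Gam (f g : V -> R) (x : V) : R :=
  (lap (fun z => f z * g z) x - f x * lap g x - g x * lap f x) / 2%:R.

Definition Gam2 (f g : V -> R) (x : V) : R :=
  (lap (Gam f g) x - Gam f (lap g) x - Gam g (lap f) x) / 2%:R.

Definition CD_at (K : R) (x : V) : Prop :=
  forall f : V -> R, K * Gam f f x <= Gam2 f f x.

End Graph.

(* Main.v *)
Require Import Defs.
From HB Require Import structures.
From mathcomp Require Import all_boot all_order all_algebra.
From mathcomp Require Import ring lra zify.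
Import Order.TTheory GRing.Theory Num.Theory.
Set Implicit Arguments. Unset Strict Implicit. Unset Printing Implicit Defensive.
Local Open Scope ring_scope.

Lemma sumr_cst (R : nmodType) (I : Type) (r : seq I) (P : pred I) (c : R) :
  \sum_(i <- r | P i) c = c *+ count P r.
Proof.
elim: r => [|a r IH]; first by rewrite big_nil.
by rewrite big_cons /= IH; case: (P a); rewrite ?mulrS.
Qed.

Section Alg.
Variables (R : realFieldType) (V : eqType) (N : V -> seq V) (D : nat).
Hypothesis Hreg : forall a, size (N a) = D.

Lemma GamE (f g : V -> R) a :
  Gam N f g a = (\sum_(y <- N a) (f y - f a) * (g y - g a)) / 2%:R.
Proof.
rewrite /Gam /lap !mulr_sumr -!sumrB; congr (_ / _).
by apply: eq_bigr => y _; ring.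
Qed.

Lemma Gam2E (f : V -> R) a :
  4%:R * Gam2 N f f a =
  \sum_(y <- N a) \sum_(z <- N y) (f z - 2%:R * f y + f a) ^+ 2
  - (2 * D)%:R * \sum_(y <- N a) (f y - f a) ^+ 2
  + 2%:R * (\sum_(y <- N a) (f y - f a)) ^+ 2.
Proof.
have -> : 4%:R * Gam2 N f f a =
   2%:R * lap N (Gam N f f) a - 4%:R * Gam N f (lap N f) a.
  by rewrite /Gam2; field.
rewrite GamE /lap.
under eq_bigr => y _ do rewrite !GamE.
set A1 := \sum_(y <- N a) (f y - f a).
set A2 := \sum_(y <- N a) (f y - f a) ^+ 2.
rewrite mulr_suml [2%:R * _]mulr_sumr [4%:R * _]mulr_sumr -sumrB.
have step : forall y, 2%:R * ((\sum_(z <- N y) (f z - f y) * (f z - f y)) / 2%:R - A2 / 2%:R)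
   - 4%:R * ((f y - f a) * (\sum_(z <- N y) (f z - f y) - A1) / 2%:R)
   = ((\sum_(z <- N y) (f z - 2%:R * f y + f a) ^+ 2 - \sum_(z <- N y) (f y - f a) ^+ 2) - A2)
     + 2%:R * (f y - f a) * A1.
  move=> y.
  have -> : \sum_(z <- N y) (f z - 2%:R * f y + f a) ^+ 2 - \sum_(z <- N y) (f y - f a) ^+ 2
     = \sum_(z <- N y) (f z - f y) * (f z - f y) - 2%:R * (f y - f a) * \sum_(z <- N y) (f z - f y).
    rewrite mulr_sumr -!sumrB; apply: eq_bigr => z _; ring.
  by field.
under eq_bigr => y _ do rewrite step.
rewrite big_split /= !sumrB sumr_cst count_predT Hreg.
have -> : \sum_(i <- N a) \sum_(z <- N i) (f i - f a) ^+ 2 = D%:R * A2.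
  rewrite /A2 mulr_sumr; apply: eq_bigr => y _.
  by rewrite sumr_cst count_predT Hreg mulr_natl.
rewrite -mulr_suml natrM -mulr_natl.
rewrite -mulr_sumr -mulr_natl -/A1; clearbody A1 A2; ring.
Qed.
End Alg.

Lemma sum_nat_ind (R : pzSemiRingType) (I : Type) (r : seq I) (P Q : pred I) :
  \sum_(i <- r | P i) (Q i)%:R = (count (fun i => P i && Q i) r)%:R :> R.
Proof.
elim: r => [|a r IH]; first by rewrite big_nil.
by rewrite big_cons /= IH; case: (P a); case: (Q a); rewrite //= ?add0r // natrD.
Qed.

Lemma count_and_eq (T : eqType) (r : seq T) (P : pred T) (c0 : T) :
  uniq r -> c0 \in r -> count (fun y => P y && (y == c0)) r = P c0.
Proof.
move=> ur cr.
rewrite (eq_count (a2 := fun y => P c0 && (y == c0))); last first.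
  by move=> y; case: eqP => [->|]; rewrite ?andbF.
case: (P c0) => /=.
  by rewrite (eq_count (a2 := pred1 c0)) // count_uniq_mem // cr.
by rewrite (eq_count (a2 := pred0)) // count_pred0.
Qed.

Lemma count_neq (T : eqType) (r : seq T) (c0 : T) :
  uniq r -> c0 \in r -> count (fun y => y != c0) r = (size r).-1.
Proof.
move=> ur cr; have := count_predC (pred1 c0) r.
rewrite count_uniq_mem // cr add1n. move=> <- /=.
by apply: eq_count => y.
Qed.

Lemma sqr_bool (R : pzRingType) (b : bool) : (b%:R : R) ^+ 2 = b%:R.
Proof. by case: b; rewrite /= ?expr1n // expr2 mulr0. Qed.

Lemma sum_bool (R : pzSemiRingType) (I : Type) (r : seq I) (Q : pred I) :
  \sum_(i <- r) (Q i)%:R = (count Q r)%:R :> R.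
Proof.
elim: r => [|a r IH]; first by rewrite big_nil.
by rewrite big_cons /= IH natrD.
Qed.

Lemma aux_lra (R : realFieldType) (a b D : nat) :
  (a%:R + D%:R + (a%:R + D%:R + 0) <= 4%:R * (a%:R - b%:R) + (D%:R + (D%:R + 0)) :> R) ->
  a%:R + D%:R + (a%:R + D%:R + 0) + (b%:R + (b%:R + (b%:R + (b%:R + 0)))) <=
  a%:R + (a%:R + (a%:R + (a%:R + 0))) + (D%:R + (D%:R + 0)) :> R.
Proof. lra. Qed.

Lemma count_split (T : eqType) (r : seq T) (P : pred T) (c0 : T) :
  count P r = count (fun y => P y && (y != c0)) r + count (fun y => P y && (y == c0)) r.
Proof.
elim: r => [|a r IH] //=; rewrite IH.
by case: (P a); case: (a == c0) => /=; lia.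
Qed.

Lemma count_sum (T : Type) (r : seq T) (P : pred T) :
  count P r = \sum_(i <- r) (P i : nat).
Proof. by elim: r => [|a r IH]; rewrite ?big_nil ?big_cons //= IH. Qed.

Section Main.
Variables (R : realFieldType) (V : eqType) (N : V -> seq V) (D : nat).
Hypothesis Huniq : forall a, uniq (N a).
Hypothesis Hloop : forall a, a \notin N a.
Hypothesis Hsym : forall a b, (b \in N a) = (a \in N b).
Hypothesis Hreg : forall a, size (N a) = D.
Variable col : V -> bool.
Hypothesis Hc : forall a b, b \in N a -> col a != col b.
Variable x : V.
Hypothesis HCD : CD_at N (2%:R : R) x.

Definition T := undup [seq z <- flatten (map N (N x)) | z != x].

Lemma memT z : z \in T <-> (z != x /\ exists2 y, y \in N x & z \in N y).
Proof.
rewrite mem_undup mem_filter; split.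
  by case/andP=> -> /flatten_mapP.
by case=> -> h; apply/flatten_mapP.
Qed.

Lemma uniqT : uniq T. Proof. exact: undup_uniq. Qed.

Lemma nbip y z : y \in N x -> z \in N y -> z \notin N x.
Proof.
move=> h1 h2; apply/negP => h3.
move: (Hc h1) (Hc h2) (Hc h3).
by case: (col x); case: (col y); case: (col z).
Qed.

Lemma T_notN z : z \in T -> z \notin N x.
Proof. by case/memT => _ [y h1 h2]; exact: nbip h1 h2. Qed.

Lemma N_neq y : y \in N x -> y != x.
Proof. by move=> h; apply/eqP => e; move: (Hloop x); rewrite -{1}e h. Qed.

Lemma exch (F : V -> V -> R) :
  \sum_(y <- N x) \sum_(z <- N y | z != x) F y z =
  \sum_(z <- T) \sum_(y <- N x | z \in N y) F y z.
Proof.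
transitivity (\sum_(y <- N x) \sum_(z <- T | z \in N y) F y z).
  apply: eq_big_seq => y hy; rewrite -big_filter -[RHS]big_filter.
  apply: perm_big; apply: uniq_perm; rewrite ?filter_uniq ?uniqT //.
  move=> z; rewrite !mem_filter; apply/idP/idP.
    by case/andP=> zx zy; rewrite zy /=; apply/memT; split => //; exists y.
  by case/andP=> zy /memT [-> _]; rewrite zy.
rewrite (eq_bigr (fun y => \sum_(z <- T) if z \in N y then F y z else 0)); last first.
  by move=> y _; rewrite big_mkcond.
by rewrite exchange_big; apply: eq_bigr => z _; rewrite [RHS]big_mkcond.
Qed.

Lemma ineq0 (f : V -> R) :
  (2 * D + 4)%:R * \sum_(y <- N x) (f y - f x) ^+ 2 <=
  \sum_(y <- N x) \sum_(z <- N y) (f z - 2%:R * f y + f x) ^+ 2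
  + 2%:R * (\sum_(y <- N x) (f y - f x)) ^+ 2.
Proof.
have h := HCD f; have e := Gam2E Hreg f x.
rewrite GamE in h.
have eA : \sum_(y <- N x) (f y - f x) * (f y - f x) = \sum_(y <- N x) (f y - f x) ^+ 2.
  by apply: eq_bigr => y _; rewrite expr2.
rewrite eA in h.
rewrite natrD natrM.
move: h e; set A2 := \sum_(y <- N x) _ ^+ 2; set G := Gam2 N f f x.
set P := \sum_(y <- N x) _; set A1 := \sum_(y <- N x) _.
rewrite natrM => h e.
lra.
Qed.

Lemma ineq1 (f : V -> R) : f x = 0 ->
  (2 * D)%:R * \sum_(y <- N x) f y ^+ 2 <=
  \sum_(z <- T) \sum_(y <- N x | z \in N y) (f z - 2%:R * f y) ^+ 2
  + 2%:R * (\sum_(y <- N x) f y) ^+ 2.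
Proof.
move=> hf; have h := ineq0 f; rewrite hf in h.
have ea : \sum_(y <- N x) (f y - 0) ^+ 2 = \sum_(y <- N x) f y ^+ 2.
  by apply: eq_bigr => y _; rewrite subr0.
have eb : \sum_(y <- N x) (f y - 0) = \sum_(y <- N x) f y.
  by apply: eq_bigr => y _; rewrite subr0.
rewrite ea eb in h.
have eP : \sum_(y <- N x) \sum_(z <- N y) (f z - 2%:R * f y + 0) ^+ 2 =
   4%:R * \sum_(y <- N x) f y ^+ 2 +
   \sum_(y <- N x) \sum_(z <- N y | z != x) (f z - 2%:R * f y) ^+ 2.
  rewrite mulr_sumr -big_split; apply: eq_big_seq => y hy.
  rewrite (bigD1_seq x) ?Huniq //; last by rewrite -Hsym.
  rewrite hf; congr (_ + _); first ring.
  by apply: eq_bigr => z _; rewrite addr0.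
rewrite eP exch in h.
move: h; set A2 := \sum_(y <- N x) _ ^+ 2; set S := \sum_(z <- T) _.
set A1 := \sum_(y <- N x) _.
rewrite !natrD ?natrM => h.
lra.
Qed.

Definition k z := count (fun y => z \in N y) (N x).
Definition s1 (v : V -> R) z := \sum_(y <- N x | z \in N y) v y.

Lemma k_pos z : z \in T -> (0 < k z)%N.
Proof.
by case/memT => _ [y h1 h2]; rewrite /k -has_count; apply/hasP; exists y.
Qed.

Lemma key (v : V -> R) :
  (2 * D)%:R * \sum_(y <- N x) v y ^+ 2 <=
  \sum_(z <- T) 4%:R * (s1 (fun y => v y ^+ 2) z - s1 v z ^+ 2 / (k z)%:R)
  + 2%:R * (\sum_(y <- N x) v y) ^+ 2.
Proof.
pose f a := if a == x then 0 else if a \in N x then v a else 2%:R * s1 v a / (k a)%:R.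
have hf : f x = 0 by rewrite /f eqxx.
have fy : forall y, y \in N x -> f y = v y.
  by move=> y hy; rewrite /f (negbTE (N_neq hy)) hy.
have h := ineq1 hf.
have e1 : \sum_(y <- N x) f y ^+ 2 = \sum_(y <- N x) v y ^+ 2.
  by apply: eq_big_seq => y hy; rewrite fy.
have e2 : \sum_(y <- N x) f y = \sum_(y <- N x) v y.
  by apply: eq_big_seq => y hy; rewrite fy.
have e3 : \sum_(z <- T) \sum_(y <- N x | z \in N y) (f z - 2%:R * f y) ^+ 2 =
   \sum_(z <- T) 4%:R * (s1 (fun y => v y ^+ 2) z - s1 v z ^+ 2 / (k z)%:R).
  apply: eq_big_seq => z hz.
  have fz : f z = 2%:R * s1 v z / (k z)%:R.
    by rewrite /f (negbTE (T_notN hz)); case/memT: hz => /negbTE ->.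
  rewrite fz.
  set c := 2%:R * s1 v z / (k z)%:R.
  have -> : \sum_(y <- N x | z \in N y) (c - 2%:R * f y) ^+ 2 =
     \sum_(y <- N x | z \in N y) (c ^+ 2 + (- (4%:R * c) * v y + 4%:R * v y ^+ 2)).
    rewrite big_seq_cond [RHS]big_seq_cond; apply: eq_bigr => y /andP [hy _].
    rewrite fy //; ring.
  rewrite !big_split /= sumr_cst -!mulr_sumr -/(k z).
  have kz : (k z)%:R != 0 :> R by rewrite pnatr_eq0 -lt0n k_pos.
  rewrite /c /s1; field.
  by rewrite kz.
by rewrite e1 e2 e3 in h.
Qed.

Lemma cntNy y : y \in N x -> count (fun z => z != x) (N y) = D.-1.
Proof. by move=> hy; rewrite count_neq ?Huniq ?Hreg // -Hsym. Qed.

Lemma sumk : \sum_(z <- T) ((k z)%:R : R) = (D * D.-1)%N%:R.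
Proof.
have := exch (fun _ _ => 1).
rewrite (eq_big_seq (fun _ => (D.-1)%:R)); last first.
  by move=> y hy; rewrite sumr_cst cntNy.
rewrite sumr_cst count_predT Hreg => e.
have -> : \sum_(z <- T) ((k z)%:R : R) = \sum_(z <- T) \sum_(y <- N x | z \in N y) (1 : R).
  by apply: eq_bigr => z _; rewrite sumr_cst.
by rewrite -e natrM mulr_natl.
Qed.

Lemma ssp_c c0 : c0 \in N x ->
  (2 * D)%:R <= \sum_(z <- T) 4%:R * ((z \in N c0)%:R - (z \in N c0)%:R / (k z)%:R)
    + 2%:R :> R.
Proof.
move=> hc.
have h := key (fun y => (y == c0)%:R).
have e0 : forall r, uniq r -> c0 \in r -> \sum_(y <- r) ((y == c0)%:R : R) = 1.
  move=> r ur cr; rewrite sum_bool (eq_count (a2 := pred1 c0)) //.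
  by rewrite count_uniq_mem // cr.
have es : forall z, s1 (fun y => (y == c0)%:R ^+ 2) z = (z \in N c0)%:R.
  move=> z; rewrite /s1 (eq_bigr (fun y => ((y == c0)%:R : R))); last first.
    by move=> y _; rewrite sqr_bool.
  by rewrite sum_nat_ind count_and_eq.
have es' : forall z, s1 (fun y => (y == c0)%:R) z = (z \in N c0)%:R.
  move=> z; rewrite /s1.
  by rewrite sum_nat_ind count_and_eq.
have ev : \sum_(y <- N x) ((y == c0)%:R : R) ^+ 2 = 1.
  by rewrite (eq_bigr (fun y => ((y == c0)%:R : R))) ?e0 ?Huniq // => y _; rewrite sqr_bool.
rewrite ev e0 ?Huniq // mulr1 expr1n mulr1 in h.
move: h; rewrite (eq_bigr (fun z => 4%:R * ((z \in N c0)%:R - (z \in N c0)%:R / (k z)%:R))) //.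
by move=> z _; rewrite es es' sqr_bool.
Qed.


Lemma ssp_T : (2 * size T <= D * D.-1)%N.
Proof.
have h : \sum_(c0 <- N x) ((2 * D)%:R : R) <=
    \sum_(c0 <- N x) (\sum_(z <- T) 4%:R * ((z \in N c0)%:R - (z \in N c0)%:R / (k z)%:R)
    + 2%:R).
  by rewrite big_seq [X in _ <= X]big_seq; apply: ler_sum => c0 hc; exact: ssp_c.
rewrite big_split /= exchange_big /= in h.
rewrite sumr_cst [X in _ <= _ + X]sumr_cst !count_predT Hreg in h.
have e : \sum_(j <- T) \sum_(i <- N x) 4%:R * ((j \in N i)%:R - (j \in N i)%:R / (k j)%:R)
    = \sum_(j <- T) (4%:R * ((k j)%:R - 1) : R).
  apply: eq_big_seq => z hz.
  rewrite -mulr_sumr sumrB -mulr_suml sum_bool.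
  have kz : (k z)%:R != 0 :> R by rewrite pnatr_eq0 -lt0n k_pos.
  have -> : count (fun i => z \in N i) (N x) = k z by [].
  by rewrite divff.
rewrite e -mulr_sumr sumrB sumk sumr_cst count_predT in h.
have e1 : (2 * D)%:R *+ D = (2 * (D * D))%N%:R :> R.
  by rewrite -mulr_natr -natrM mulnA.
have e2 : 2%:R *+ D = (2 * D)%N%:R :> R.
  by rewrite -mulr_natr -natrM.
rewrite e1 e2 in h.
have hD : (D * D = D * D.-1 + D)%N by case: (D) => //= n; rewrite mulnS; lia.
have h2 : ((2 * (D * D) + 4 * size T)%N%:R : R) <= (4 * (D * D.-1) + 2 * D)%N%:R.
  move: h; rewrite hD !natrD; move: (D * D.-1)%N (size T) => a b; exact: aux_lra.
rewrite ler_nat in h2.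
lia.
Qed.

Lemma walk0 a b : walk N 0 a b -> a = b.
Proof. by case=> p [sp [pp lp]]; case: p sp pp lp => [|? ?] //= _ _ <-. Qed.

Lemma walk1 a b : walk N 1 a b -> b \in N a.
Proof.
case=> p [sp [pp lp]]; case: p sp pp lp => [|w [|? ?]] //= _.
by rewrite andbT /adj => h <-.
Qed.

Lemma walk2 a b : walk N 2 a b -> exists2 w, w \in N a & b \in N w.
Proof.
case=> p [sp [pp lp]]; case: p sp pp lp => [|w [|u [|? ?]]] //= _.
by rewrite andbT /adj => /andP [h1 h2] <-; exists w.
Qed.

Lemma walk1' a b : b \in N a -> walk N 1 a b.
Proof. by move=> h; exists [:: b]; rewrite /= /adj h. Qed.

Lemma walk2' a w b : w \in N a -> b \in N w -> walk N 2 a b.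
Proof. by move=> h1 h2; exists [:: w; b]; rewrite /= /adj h1 h2. Qed.

Lemma sphere1 y : sphere N x 1 y -> y \in N x.
Proof. by case=> /walk1. Qed.

Lemma sphere2T z : sphere N x 2 z -> z \in T.
Proof.
case=> /walk2 [w h1 h2] hn; apply/memT; split; last by exists w.
apply/eqP => e; apply: (hn 0%N) => //; exists [::]; split => //.
Qed.

Lemma T_sphere2 z : z \in T -> sphere N x 2 z.
Proof.
move=> hz; have hz' := T_notN hz; case/memT: hz => zx [w h1 h2].
split; first exact: walk2' h1 h2.
case=> [|[|m]] // _.
  by move/walk0 => e; move: zx; rewrite e eqxx.
by move/walk1 => h; move: hz'; rewrite h.
Qed.

Lemma dminus_k z : z \in T -> dminus_is N x z 2 -> k z = 2%N.
Proof.
move=> hz [s [us [ss hs]]].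
have hz' := T_notN hz; move: (hz) => /memT [zx' [w' h1' h2']].
have dz : dist_le N z x 2.
  by exists 2%N; split => //; apply: (walk2' (w := w')); rewrite -Hsym.
have pe : perm_eq s [seq y <- N x | z \in N y].
  apply: uniq_perm => //; first by rewrite filter_uniq.
  move=> y; rewrite mem_filter; apply/idP/idP.
    move/hs => [hzy [kk [[m [hm wm]] hnd]]].
    have kk1 : (kk <= 1)%N.
      by rewrite leqNgt; apply/negP => kk2; apply: hnd; case: dz => m' [hm' wm']; exists m'; split => //; lia.
    have : (m <= 1)%N by lia.
    case: m hm wm => [|[|m]] // _ wm _.
      move/walk0: wm => e; move: hzy; rewrite /adj e Hsym => h.
      by move: hz'; rewrite h.
    move/walk1: wm => h; rewrite (Hsym x y) h andbT.
    by move: hzy; rewrite /adj Hsym.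
  case/andP=> hy hzy; apply/hs; split; first by rewrite /adj Hsym.
  exists 1%N; split.
    by exists 1%N; split => //; apply: walk1'; rewrite -Hsym.
  case=> [[|[|m]] [hm wm]] //.
    by move/walk0: wm => e; move: zx'; rewrite e eqxx.
  by move/walk1: wm; rewrite -Hsym => h; move: hz'; rewrite h.
by rewrite /k -size_filter -(perm_size pe) ss.
Qed.

Lemma cntT c0 : c0 \in N x -> \sum_(z <- T) ((z \in N c0)%:R : R) = (D.-1)%:R.
Proof.
move=> hc; have := exch (fun y _ => ((y == c0)%:R : R)).
rewrite (eq_big_seq (fun y => ((y == c0)%:R : R) *+ D.-1)); last first.
  by move=> y hy; rewrite sumr_cst cntNy.
rewrite sumrMnl sum_bool (eq_count (a2 := pred1 c0)) // count_uniq_mem ?Huniq // hc.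
move=> ->; apply: eq_bigr => z _.
by rewrite sum_nat_ind count_and_eq ?Huniq.
Qed.

Lemma common (H2 : forall z, z \in T -> k z = 2%N) y1 b :
  y1 \in N x -> b \in N x -> y1 != b ->
  exists z, [/\ z \in N y1, z != x & z \in N b].
Proof.
move=> hy1 hb nyb.
case: (boolP (has (fun z => (z != x) && (z \in N b)) (N y1))).
  by case/hasP=> z hz /andP [h1 h2]; exists z.
move=> hn; exfalso.
pose v := fun y => ((y == y1)%:R - (y == b)%:R : R).
have h := key v.
have sqv : forall y, v y ^+ 2 = (y == y1)%:R + (y == b)%:R.
  move=> y; rewrite /v.
  have : ~~ ((y == y1) && (y == b)).
    by apply/negP => /andP [/eqP e1 /eqP e2]; move: nyb; rewrite -e1 e2 eqxx.
  by case: (y == y1); case: (y == b) => //= _; ring.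
have e1 : forall c0, c0 \in N x -> \sum_(y <- N x) ((y == c0)%:R : R) = 1.
  move=> c0 hc; rewrite sum_bool (eq_count (a2 := pred1 c0)) //.
  by rewrite count_uniq_mem ?Huniq // hc.
have ev2 : \sum_(y <- N x) v y ^+ 2 = 2%:R.
  by rewrite (eq_bigr _ (fun y _ => sqv y)) big_split /= !e1.
have ev1 : \sum_(y <- N x) v y = 0.
  by rewrite /v sumrB !e1 // subrr.
have hes : forall z, z \in T ->
   4%:R * (s1 (fun y => v y ^+ 2) z - s1 v z ^+ 2 / (k z)%:R) =
   2%:R * ((z \in N y1)%:R + (z \in N b)%:R).
  move=> z hz.
  have nb : ~~ ((z \in N y1) && (z \in N b)).
    apply/negP => /andP [a1 a2]; move/negP: hn; apply; apply/hasP; exists z => //.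
    by case/memT: hz => -> _.
  rewrite /s1 (eq_bigr _ (fun y _ => sqv y)) big_split /= /v sumrB.
  rewrite !sum_nat_ind !count_and_eq ?Huniq // H2 //.
  move: nb; case: (z \in N y1); case: (z \in N b) => //= _; by field.
rewrite ev2 ev1 (eq_big_seq _ hes) -mulr_sumr big_split /= !cntT // in h.
have D0 : (0 < D)%N by rewrite -(Hreg x); case: (N x) hy1.
have hD : (D.-1)%:R + 1 = D%:R :> R by rewrite -[1]/(1%:R) -natrD addn1 prednK.
move: h; rewrite natrM -hD; move: (D.-1) => a; rewrite expr0n /= mulr0 addr0.
move=> h; have : (0 : R) <= a%:R by [].
lra.
Qed.

Lemma ncp_main (H2 : forall z, z \in T -> k z = 2%N) y1 y2 z1 z2 :
  y1 \in N x -> y2 \in N x -> y1 != y2 -> z1 \in T -> z2 \in T ->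
  z1 \in N y1 -> z2 \in N y1 -> y2 \in N z1 -> y2 \in N z2 -> z1 = z2.
Proof.
move=> hy1 hy2 n12 t1 t2 a1 a2 a3 a4.
apply/eqP; apply/negPn/negP => hne.
pose Z := [seq z <- N y1 | z != x].
pose B := [seq b <- N x | b != y1].
have sZ : size Z = D.-1 by rewrite size_filter cntNy.
have sB : size B = D.-1 by rewrite size_filter count_neq ?Huniq ?Hreg.
have c1 : forall z, z \in Z -> count (fun b => z \in N b) B = 1%N.
  move=> z; rewrite mem_filter => /andP [zx zy].
  have zT : z \in T by apply/memT; split => //; exists y1.
  have := H2 z zT; rewrite /k (count_split _ _ y1) count_and_eq ?Huniq // zy.
  rewrite count_filter (eq_count (a1 := predI _ _) (a2 := fun y => (z \in N y) && (y != y1))) //= => e.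
  lia.
have c2 : forall b, b \in B -> (1 + (b == y2) <= count (fun z => z \in N b) Z)%N.
  move=> b; rewrite mem_filter => /andP [by1 hb].
  case: (eqVneq b y2) => [->|_] /=.
    have : (size [:: z1; z2] <= size [seq z <- Z | z \in N y2])%N.
      apply: uniq_leq_size; first by rewrite /= inE hne.
      move=> z; rewrite !inE => /orP [] /eqP ->; rewrite !mem_filter.
        by rewrite -Hsym a3 a1 andbT; case/memT: t1 => ->.
      by rewrite -Hsym a4 a2 andbT; case/memT: t2 => ->.
    by rewrite size_filter.
  have nyb : y1 != b by rewrite eq_sym.
  rewrite addn0 -has_count; have [z [h1 h2 h3]] := common H2 hy1 hb nyb.
  by apply/hasP; exists z => //; rewrite mem_filter h2 h1.
have ex : \sum_(z <- Z) \sum_(b <- B) ((z \in N b) : nat) =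
          \sum_(b <- B) \sum_(z <- Z) ((z \in N b) : nat) by rewrite exchange_big.
have L : \sum_(z <- Z) \sum_(b <- B) ((z \in N b) : nat) = D.-1.
  rewrite -sZ -sum1_size; apply: eq_big_seq => z hz; by rewrite -count_sum c1.
have Rg : (D.-1 + 1 <= \sum_(b <- B) \sum_(z <- Z) ((z \in N b) : nat))%N.
  have e : \sum_(b <- B) \sum_(z <- Z) ((z \in N b) : nat) =
     \sum_(b <- B) count (fun z => z \in N b) Z.
    by apply: eq_bigr => b _; rewrite count_sum.
  have hs : (\sum_(b <- B) (1 + (b == y2)) <= \sum_(b <- B) count (fun z => z \in N b) Z)%N.
    rewrite big_seq [X in (_ <= X)%N]big_seq; apply: leq_sum => b hb; exact: c2.
  have y2B : y2 \in B by rewrite mem_filter eq_sym n12 hy2.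
  have e2 : (\sum_(b <- B) (1 + (b == y2)) = D.-1 + 1)%N.
    rewrite big_split /= sum1_size sB -count_sum.
    rewrite (eq_count (a2 := pred1 y2)) // count_uniq_mem ?y2B //.
    by rewrite filter_uniq ?Huniq.
  by rewrite e -e2.
rewrite ex in L; rewrite L in Rg.
by move: Rg; rewrite addn1 ltnn.
Qed.

Lemma main_sec : SSP N D x /\ NCP N x.
Proof.
split.
  move=> s us hs.
  have h1 : (size s <= size T)%N.
    by apply: uniq_leq_size => // z /hs; exact: sphere2T.
  apply: (leq_trans h1); rewrite bin2 geq_half_double -mul2n; exact: ssp_T.
move=> Hall y1 y2 sy1 sy2 ne z1 z2 sz1 sz2 b1 b2 b3 b4.
have H2 : forall z, z \in T -> k z = 2%N.
  by move=> z hz; apply: dminus_k => //; apply: Hall; exact: T_sphere2.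
apply: (ncp_main H2 (y1 := y1) (y2 := y2)); rewrite ?sphere2T ?sphere1 //.
by apply/eqP.
Qed.

End Main.

Local Close Scope ring_scope.
Unset Implicit Arguments.

Theorem theorem5 (R : realFieldType) (V : eqType) (N : V -> seq V) (D : nat)
  (Huniq : forall a, uniq (N a))
  (Hloop : forall a, a \notin N a)
  (Hsym : forall a b, (b \in N a) = (a \in N b))
  (Hreg : forall a, size (N a) = D)
  (Hbip : exists c : V -> bool, forall a b, b \in N a -> c a != c b)
  (x : V)
  (HCD : CD_at N (2%:R : R) x) :
  SSP N D x /\ NCP N x.
Proof.
case: Hbip => col Hc.
exact: (main_sec Huniq Hloop Hsym Hreg Hc HCD).
Qed.
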